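(* Let $k$ and $c$ be positive integers, let $G$ be a finite simple graph of order $n$, and let $L \subseteq V(G)$ be fixed. Let $C_{1},\dots,C_{k}$ be pairwise vertex-disjoint $c$-chorded cycles of $G$, each with a fixed orientation, such that $C^{*} := \bigcup_{p=1}^{k} C_{p}$ is not a spanning subgraph of $G$, and such that among all choices of $k$ pairwise vertex-disjoint $c$-chorded cycles in $G$, (A1) $|V(C^{*}) \cap L|$ is as large as possible, and (A2) subject to (A1), $|V(C^{*})|$ is as large as possible. Let $H^{*} = G - V(C^{*})$ and let $H$ be a component of $H^{*}$. Let $C = C_{p}$ for some $1 \le p \le k$, let $v \in N_{C}(H)$ and $x \in V(H)$. Then (i) $v^{+}x \notin E(G)$, and (ii) $d_{H^{*}\cup C}(v^{+}) + d_{H^{*}\cup C}(x) \le |V(H^{*}) \cup V(C)| - 1$.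
   Context: A cycle $C$ in $G$ is a $c$-chorded cycle if $|E(G[V(C)]) \setminus E(C)| \ge c$, where $G[X]$ is the induced subgraph on $X$. For $v \in V(G)$ and $X \subseteq V(G)$, $N_{X}(v) = N_{G}(v) \cap X$ and $d_{X}(v) = |N_{X}(v)|$; for a subgraph $F$ we write $N_{F}$, $d_{F}$ for $N_{V(F)}$, $d_{V(F)}$, and $H^{*}\cup C$ denotes the vertex set $V(H^{*}) \cup V(C)$. For $V' \subseteq V(G)$, $N_{X}(V') = \bigcup_{u \in V'} N_{X}(u)$. For a vertex $v$ on an oriented cycle $C$, $v^{+}$ denotes the successor of $v$ along the orientation of $C$. *)

(* Defs.v *)
(* A finite simple graph is a symmetric irreflexive
   relation e on a finType T (vertex set = T). *)
From mathcomp Require Import all_boot.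
Set Implicit Arguments. Unset Strict Implicit. Unset Printing Implicit Defensive.

Section Graphs.
Variable T : finType.
Variable e : rel T.

Definition cverts (s : seq T) : {set T} := [set x | x \in s].

(* an oriented cycle: distinct vertices, length >= 3, consecutive
   vertices (cyclically) adjacent; orientation = order of the sequence,
   successor v^+ = next s v *)
Definition is_cycle (s : seq T) : bool := [&& uniq s, 2 < size s & cycle e s].

Definition induced_edges (X : {set T}) : {set {set T}} :=
  [set [set u; v] | u in X, v in X & e u v].

Definition cycle_edges (s : seq T) : {set {set T}} :=
  [set [set u; next s u] | u in cverts s].

Definition chorded_cycle (c : nat) (s : seq T) : bool :=
  is_cycle s && (c <= #|induced_edges (cverts s) :\: cycle_edges s|).

Definition chorded_family (c k : nat) (C : 'I_k -> seq T) : Prop :=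
  (forall p, chorded_cycle c (C p)) /\
  (forall p q : 'I_k, p != q -> [disjoint cverts (C p) & cverts (C q)]).

Definition union_verts (k : nat) (C : 'I_k -> seq T) : {set T} :=
  \bigcup_(p < k) cverts (C p).

Definition nbhd (X : {set T}) (v : T) : {set T} := [set u in X | e v u].
Definition deg (X : {set T}) (v : T) : nat := #|nbhd X v|.
Definition nbhd_set (X V' : {set T}) : {set T} := \bigcup_(u in V') nbhd X u.

Definition component (X : {set T}) (h0 : T) : {set T} :=
  [set y in X | connect (fun a b => [&& e a b, a \in X & b \in X]) h0 y].

End Graphs.

(* Main.v *)
Require Import Defs.
From mathcomp Require Import all_boot zify.
Set Implicit Arguments. Unset Strict Implicit. Unset Printing Implicit Defensive.

Lemma cverts_union (T : finType) (k : nat) (C : 'I_k -> seq T) p z :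
  z \in cverts (C p) -> z \in union_verts C.
Proof. by move=> hz; apply/bigcupP; exists p. Qed.

Lemma replace_false (T : finType) (e : rel T) (k c : nat) (L : {set T})
  (C : 'I_k -> seq T) (p : 'I_k) (s' : seq T) :
  chorded_family e c C ->
  (forall D : 'I_k -> seq T, chorded_family e c D ->
     #|union_verts D :&: L| <= #|union_verts C :&: L| /\
     (#|union_verts D :&: L| = #|union_verts C :&: L| ->
        #|union_verts D| <= #|union_verts C|)) ->
  chorded_cycle e c s' ->
  cverts (C p) \subset cverts s' ->
  cverts s' \subset cverts (C p) :|: ~: union_verts C ->
  ~~ (cverts s' \subset cverts (C p)) -> False.
Proof.
move=> [hc hd] hmax hs' sub1 sub2 /subsetPn [y ys' yn].
pose D := fun q : 'I_k => if q == p then s' else C q.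
have key : forall r, r != p -> [disjoint cverts s' & cverts (C r)].
  move=> r rp; rewrite -setI_eq0; apply/eqP/setP => z; rewrite !inE.
  apply/negbTE/andP => [[z1 z2]].
  have := subsetP sub2 z; rewrite inE z1 => /(_ isT); rewrite inE => /orP [zV|].
    have := hd p r; rewrite eq_sym rp => /(_ isT).
    by rewrite -setI_eq0 => /eqP/setP/(_ z); rewrite inE in zV; rewrite !inE zV z2.
  by rewrite inE (cverts_union (p := r)) // inE.
have hD : chorded_family e c D.
  split.
    by move=> q; rewrite /D; case: eqP.
  move=> q r qr; rewrite /D.
  case: (eqVneq q p) => [eqp|qp]; case: (eqVneq r p) => [erp|rp].
  - by subst; rewrite eqxx in qr.
  - exact: key.
  - by rewrite disjoint_sym; apply: key.
  - exact: hd.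
have sub : union_verts C \subset union_verts D.
  apply/subsetP => z /bigcupP [q _ hz]; apply/bigcupP; exists q => //.
  rewrite /D; case: eqP => [eqp|_] //; subst.
  exact: (subsetP sub1).
have yD : y \in union_verts D.
  by apply/bigcupP; exists p => //; rewrite /D eqxx.
have yU : y \notin union_verts C.
  by have := subsetP sub2 y ys'; rewrite inE (negbTE yn) /= inE.
have pr : union_verts C \proper union_verts D.
  by apply/properP; split => //; exists y.
have [h1 h2] := hmax D hD.
have h3 : #|union_verts C :&: L| <= #|union_verts D :&: L|.
  by apply: subset_leq_card; apply: setSI.
have := proper_card pr.
have := h2 ltac:(lia). lia.
Qed.

Lemma chords_sub (T : finType) (e : rel T) (V : {set T}) (F : {set {set T}}) (s' : seq T) :
  cycle (fun a b => e a b && ((a \notin V) || (b \notin V) || ([set a; b] \in F))) s' ->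
  V \subset cverts s' ->
  induced_edges e V :\: F \subset induced_edges e (cverts s') :\: cycle_edges s'.
Proof.
move=> hcy hV; apply/subsetP => E; rewrite !inE => /andP [EF /imset2P [a b aV]].
rewrite inE => /andP [bV eab] Eab; subst E.
apply/andP; split; last first.
  by apply/imset2P; exists a b => //; [exact: (subsetP hV) | rewrite inE (subsetP hV) ?eab].
apply/imsetP => [[y ys' Ey]].
rewrite inE in ys'.
have /andP [_] := next_cycle hcy ys'.
have yab : y \in [set a; b] by rewrite Ey !inE eqxx.
have nab : next s' y \in [set a; b] by rewrite Ey !inE eqxx orbT.
have yV : y \in V by move: yab; rewrite !inE => /orP [] /eqP ->.
have nV : next s' y \in V by move: nab; rewrite !inE => /orP [] /eqP ->.
by rewrite yV nV /= => hF; move: EF; rewrite Ey hF.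
Qed.

Lemma next_edge (T : finType) (e : rel T) (s : seq T) a :
  cycle e s -> a \in s -> e a (next s a) && ([set a; next s a] \in cycle_edges s).
Proof.
move=> hc ha; rewrite (next_cycle hc ha) /=.
by apply/imsetP; exists a; rewrite ?inE.
Qed.

Lemma comp_path (T : finType) (e : rel T) (X : {set T}) h0 y z :
  symmetric e -> y \in component e X h0 -> z \in component e X h0 ->
  exists q, [/\ path e y q, last y q = z, uniq (y :: q) & all (fun t => t \in X) (y :: q)].
Proof.
move=> se; rewrite !inE => /andP [yX cy] /andP [zX cz].
set E := (fun a b => [&& e a b, a \in X & b \in X]) in cy cz.
have sE : symmetric E.
  by move=> a b; rewrite /E se; case: (a \in X); case: (b \in X); rewrite ?andbF.
have cyz : connect E y z.
  by apply: connect_trans cz; rewrite (sym_connect_sym sE).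
case/connectP: cyz => r hr ->.
case: (shortenP hr) => q hq uq _.
exists q; split => //.
  by apply: sub_path hq => a b /and3P [].
rewrite /= yX /=.
clear hr; elim: q y hq {uq yX cy cz} => //= a q IH y' /andP [/and3P [_ _ aX] hp].
by rewrite aX (IH a hp).
Qed.

Lemma build (T : finType) (e : rel T) (k c : nat) (L : {set T})
  (C : 'I_k -> seq T) (p : 'I_k) (i : nat) (Q s' : seq T) (F : {set {set T}}) (u : T) :
  chorded_family e c C ->
  (forall D : 'I_k -> seq T, chorded_family e c D ->
     #|union_verts D :&: L| <= #|union_verts C :&: L| /\
     (#|union_verts D :&: L| = #|union_verts C :&: L| ->
        #|union_verts D| <= #|union_verts C|)) ->
  perm_eq s' (rot i (C p) ++ Q) -> u \in Q -> uniq Q ->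
  all (fun z => z \in ~: union_verts C) Q ->
  c <= #|induced_edges e (cverts (C p)) :\: F| ->
  cycle (fun a b => e a b && ((a \notin cverts (C p)) || (b \notin cverts (C p))
                               || ([set a; b] \in F))) s' -> False.
Proof.
move=> hfam hmax hperm uQ uniqQ allQ hF hcy.
have [hc _] := hfam. have /andP [/and3P [us sz cy] _] := hc p.
have QV : forall z, z \in Q -> z \notin C p.
  move=> z zQ; have := allP allQ z zQ; rewrite inE => /negP nU; apply/negP => zV.
  by apply: nU; apply: (cverts_union (p := p)); rewrite inE.
have mem' : forall z, (z \in s') = (z \in C p) || (z \in Q).
  by move=> z; rewrite (perm_mem hperm) mem_cat mem_rot.
have sub1 : cverts (C p) \subset cverts s'.
  by apply/subsetP => z; rewrite !inE mem' => ->.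
apply: (replace_false (p:=p) (s':=s') hfam hmax) => //.
- apply/andP; split; first (apply/and3P; split).
  + rewrite (perm_uniq hperm) cat_uniq rot_uniq us uniqQ andbT /=.
    by apply/hasPn => z zQ; rewrite mem_rot; apply: QV.
  + by rewrite (perm_size hperm) size_cat size_rot; apply: leq_trans sz _; apply: leq_addr.
  + by apply: sub_cycle hcy => a b /andP [].
  + apply: leq_trans hF _; apply: subset_leq_card; exact: chords_sub hcy sub1.
- apply/subsetP => z; rewrite !inE mem' => /orP [->//|zQ].
  by have := allP allQ z zQ; rewrite !inE => ->; rewrite orbT.
- apply/subsetPn; exists u; first by rewrite inE mem' uQ orbT.
  by rewrite inE; apply: QV.
Qed.

Lemma rot_fcycle (T : eqType) (s S : seq T) (i : nat) v :
  uniq s -> rot i s = v :: S -> fcycle (next s) (v :: S).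
Proof.
move=> us hrot; have u0 : uniq (rot i s) by rewrite rot_uniq.
have := cycle_next u0.
move/(sub_cycle (e' := frel (next s))) => /(_ _) h.
rewrite -hrot; apply: h => a b /=; by rewrite (next_rot i us).
Qed.

Lemma path_good (T : finType) (e : rel T) (s : seq T) (R : rel T) a t :
  cycle e s -> all (fun z => z \in s) (a :: t) ->
  (forall y, y \in a :: t -> next s y \in a :: t -> e y (next s y) ->
     [set y; next s y] \in cycle_edges s -> R y (next s y)) ->
  path (frel (next s)) a t -> path R a t.
Proof.
move=> cy hall H hp.
apply: (sub_in_path (P := mem (a :: t))) _ _ hp; last by apply/allP.
move=> y z yin zin /eqP hz; subst z.
have /andP [h1 h2] := next_edge cy (allP hall y yin).
exact: H.
Qed.

Lemma Hs_notV (T : finType) (k : nat) (C : 'I_k -> seq T) p z :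
  z \in ~: union_verts C -> z \notin C p.
Proof.
rewrite inE => /negP nU; apply/negP => zV.
by apply: nU; apply: (cverts_union (p := p)); rewrite inE.
Qed.

Lemma coreA (T : finType) (e : rel T) (k c : nat) (L : {set T})
  (C : 'I_k -> seq T) (p : 'I_k) (v u : T) (q : seq T) :
  symmetric e -> chorded_family e c C ->
  (forall D : 'I_k -> seq T, chorded_family e c D ->
     #|union_verts D :&: L| <= #|union_verts C :&: L| /\
     (#|union_verts D :&: L| = #|union_verts C :&: L| ->
        #|union_verts D| <= #|union_verts C|)) ->
  v \in C p -> e u v -> path e u q -> uniq (u :: q) ->
  all (fun z => z \in ~: union_verts C) (u :: q) ->
  e (next (C p) v) (last u q) -> False.
Proof.
move=> se hfam hmax hv euv hq uq allQ hlast.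
have [hc _] := hfam. have /andP [/and3P [us sz cy] hch] := hc p.
case: (rot_to hv) => i S hrot.
have hn := rot_fcycle us hrot.
case: S hrot hn => [|a1 S'] hrot hn.
  by have := size_rot i (C p); rewrite hrot /= => h; rewrite -h in sz.
move: hn => /= /andP [/eqP hva1 hpath].
rewrite hva1 in hlast.
have notV : forall z, z \in u :: q -> z \notin cverts (C p).
  by move=> z zin; rewrite inE; have := allP allQ z zin; exact: Hs_notV.
apply: (build (p:=p) (i:=i) (Q := u :: q) (s' := v :: (u :: q) ++ a1 :: S')
          (F := cycle_edges (C p)) (u:=u) hfam hmax) => //.
- rewrite hrot; apply/permP => P /=; rewrite !count_cat /=; lia.
- exact: mem_head.
- set R := (fun a b => _).
  have h1 : R v u by rewrite /R se euv (notV u (mem_head _ _)) orbT.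
  have h2 : path R u q.
    apply: (sub_in_path (P := mem (u :: q))) _ _ hq; last by apply/allP.
    by move=> a b ain bin eab; rewrite /R eab (notV a ain).
  have h3 : R (last u q) a1.
    by rewrite /R se hlast (notV _ (mem_last u q)).
  have h4 : path R a1 (rcons S' v).
    apply: (path_good (e := e) (s := C p)) hpath => //.
      apply/allP => z zin; rewrite -(mem_rot i) hrot.
      by move: zin; rewrite !inE mem_rcons !inE => /or3P [] ->; rewrite ?orbT.
    by move=> y _ _ h5 h6; rewrite /R h5 h6 !orbT.
  by rewrite /= rcons_cat cat_path /= h1 h2 h3 h4.
Qed.

Lemma arith6 (a b c d e f : nat) :
  a + (b + (c + (d + (e + f)))) = a + (c + (d + b + (e + f))).
Proof. lia. Qed.

Lemma set2_out (T : finType) (a b c d : T) (P : pred T) :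
  P a -> P b -> ~~ P c -> [set a; b] != [set c; d].
Proof.
move=> Pa Pb Pc; apply/eqP => h; have : c \in [set a; b] by rewrite h !inE eqxx.
rewrite !inE => /orP [] /eqP hc; [by move: Pc; rewrite hc Pa | by move: Pc; rewrite hc Pb].
Qed.

Lemma set2_out2 (T : finType) (a b c d : T) (P : pred T) :
  P a -> P b -> ~~ P d -> [set a; b] != [set c; d].
Proof.
move=> Pa Pb Pd; apply/eqP => h; have : d \in [set a; b] by rewrite h !inE eqxx orbT.
rewrite !inE => /orP [] /eqP hc; [by move: Pd; rewrite hc Pa | by move: Pd; rewrite hc Pb].
Qed.

Lemma coreB (T : finType) (e : rel T) (k c : nat) (L : {set T})
  (C : 'I_k -> seq T) (p : 'I_k) (v w x : T) (q : seq T) :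
  symmetric e -> chorded_family e c C ->
  (forall D : 'I_k -> seq T, chorded_family e c D ->
     #|union_verts D :&: L| <= #|union_verts C :&: L| /\
     (#|union_verts D :&: L| = #|union_verts C :&: L| ->
        #|union_verts D| <= #|union_verts C|)) ->
  v \in C p -> w \in C p -> w != v -> w != next (C p) v ->
  e x w -> e (last x q) v -> path e x q -> uniq (x :: q) ->
  all (fun z => z \in ~: union_verts C) (x :: q) ->
  e (next (C p) v) (next (C p) w) -> False.
Proof.
move=> se hfam hmax hv hw wv wnv exw elv hq uq allQ hnn.
have [hc _] := hfam. have /andP [/and3P [us sz cy] hch] := hc p.
case: (rot_to hv) => i S hrot.
have hn := rot_fcycle us hrot.
have wS : w \in S.
  by have := mem_rot i (C p) w; rewrite hrot hw inE (negbTE wv).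
move: hrot hn; case/path.splitP: wS => S2 B hrot hn.
case: S2 hrot hn => [|a1 A2] hrot hn.
  by move: hn => /= /andP [/eqP hvw]; rewrite hvw eqxx in wnv.
move: hn => /= /andP [/eqP hva1]; rewrite rcons_cat cat_path last_rcons => /andP [hA hB].
rewrite hva1 in wnv hnn.
have us0 : uniq (v :: (a1 :: rcons A2 w) ++ B) by rewrite -hrot rot_uniq.
have memS : forall z, (z \in C p) = (z \in v :: (a1 :: rcons A2 w) ++ B).
  by move=> z; rewrite -hrot mem_rot.
have hdis : forall z, z \in a1 :: rcons A2 w -> z \in rcons B v -> False.
  move=> z zA zB; move: us0; rewrite cons_uniq cat_uniq => /andP [hv0 /and3P [_ hh _]].
  move/hasPn: hh => hh.
  move: zB; rewrite mem_rcons inE => /orP [/eqP zv|zB].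
    by subst z; move: hv0; rewrite mem_cat zA.
  by have := hh z zB; rewrite zA.
have w'B : next (C p) w \in rcons B v.
  case: B hrot us0 memS hdis hB => [|b1 B'] /= hrot us0 memS hdis hB.
    by move: hB => /andP [/eqP ->]; rewrite inE.
  by move: hB => /andP [/eqP ->]; rewrite inE eqxx.
set w' := next (C p) w.
have wA : w \in a1 :: rcons A2 w by rewrite inE mem_rcons inE eqxx orbT.
have notV : forall z, z \in x :: q -> z \notin cverts (C p).
  by move=> z zin; rewrite inE; have := allP allQ z zin; exact: Hs_notV.
set g := [set w; w'].
set f := [set w'; a1].
set F := (cycle_edges (C p) :\ g) :|: [set f].
have gf : g != f.
  apply/eqP => hgf; have : w \in f by rewrite -hgf /g !inE eqxx.
  rewrite /f !inE => /orP [/eqP ww'|/eqP wa1].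
    by apply: (hdis w wA); rewrite ww'.
  by rewrite wa1 eqxx in wnv.
apply: (build (p:=p) (i:=i) (Q := x :: q)
          (s' := v :: rev B ++ (a1 :: rcons A2 w) ++ x :: q)
          (F := F) (u:=x) hfam hmax) => //.
- rewrite hrot; apply/permP => P /=; rewrite !count_cat /= count_rev !count_cat /=; exact: arith6.
- exact: mem_head.
- have hsub : g |: ((induced_edges e (cverts (C p)) :\: cycle_edges (C p)) :\ f)
      \subset induced_edges e (cverts (C p)) :\: F.
    apply/subsetP => z; rewrite in_setU1 => /orP [/eqP -> | ].
      rewrite in_setD /F in_setU in_setD1 eqxx in_set1 (negbTE gf) /=.
      apply/imset2P; exists w w' => //; first by rewrite inE.
      by rewrite inE inE mem_next hw /w' (next_cycle cy hw).
    rewrite in_setD1 in_setD => /andP [zf /andP [zc zi]].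
    by rewrite in_setD zi andbT /F in_setU in_setD1 (negbTE zc) andbF /= in_set1.
  have gnot : g \notin (induced_edges e (cverts (C p)) :\: cycle_edges (C p)) :\ f.
    rewrite in_setD1 in_setD.
    have -> : g \in cycle_edges (C p) by apply/imsetP; exists w; rewrite ?inE.
    by rewrite andbF.
  apply: leq_trans hch _; apply: leq_trans _ (subset_leq_card hsub).
  rewrite cardsU1 gnot (cardsD1 f (_ :\: _)) add1n.
  by case: (f \in _).
- set R := (fun a b => _).
  have PAs : all (fun z => z \in C p) (a1 :: rcons A2 w).
    by apply/allP => z zin; rewrite memS inE mem_cat zin orbT.
  have PBs : all (fun z => z \in C p) (rcons B v).
    apply/allP => z; rewrite memS mem_rcons !inE mem_cat => /orP [->//|->].
    by rewrite !orbT.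
  have f2 : path R a1 (rcons A2 w).
    apply: (path_good (e := e) (s := C p)) hA => // y yin nin h5 h6.
    rewrite /R h5 /F in_setU in_setD1 h6 andbT /g.
    rewrite (@set2_out2 T y (next (C p) y) w w' (fun z => z \in a1 :: rcons A2 w)) ?orbT //.
    by apply/negP => hh; apply: (hdis w' hh w'B).
  have f1 : path R v (rev B) && R (last v (rev B)) a1.
    case: B hrot us0 memS hdis hB w'B PBs => [|b1 B'] hrot us0 memS hdis hB w'B PBs.
      move: hB => /= /andP [/eqP hw'v _].
      rewrite /= /R -{1}hva1 (next_cycle cy hv) /F in_setU in_set1 /f /w' hw'v eqxx.
      by rewrite !orbT.
    move: hB => /= /andP [/eqP hw'b hB].
    apply/andP; split; last first.
      rewrite rev_cons last_rcons /R se /F in_setU in_set1 /f /w' hw'b eqxx !orbT andbT.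
      by move: hnn; rewrite /w' hw'b.
    have := rev_path R b1 (rcons B' v); rewrite last_rcons belast_rcons => ->.
    apply: (path_good (e := e) (s := C p) (R := fun a b => R b a)) hB => //.
    move=> y yin nin h5 h6.
    rewrite /R se h5 /F in_setU in_setD1 setUC h6 andbT /g.
    rewrite (@set2_out T y (next (C p) y) w w' (fun z => z \in b1 :: rcons B' v)) ?orbT //.
    by apply/negP => hh; apply: (hdis w wA hh).
  have f3 : R w x by rewrite /R se exw (notV x (mem_head _ _)) orbT.
  have f4 : path R x q.
    apply: (sub_in_path (P := mem (x :: q))) _ _ hq; last by apply/allP.
    by move=> a b ain bin eab; rewrite /R eab (notV a ain).
  have f5 : R (last x q) v by rewrite /R elv (notV _ (mem_last x q)).
  move/andP: f1 => [f1a f1b].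
  rewrite /= !rcons_cat /= cat_path f1a /= f1b /=.
  by rewrite rcons_cat cat_path f2 last_rcons /= f3 rcons_path f4 f5.
Qed.

Lemma nbhdU (T : finType) (e : rel T) (X Y : {set T}) a :
  nbhd e (X :|: Y) a = nbhd e X a :|: nbhd e Y a.
Proof. by apply/setP => z; rewrite !inE andb_orl. Qed.

Lemma arith_fin (A1 A2 B1 B2 I1 I2 Hs V H HD HX U1 U2 UX : nat) :
  U1 = A1 + A2 - I1 -> U2 = B1 + B2 - I2 -> A1 <= HD -> B1 <= HX ->
  B2 + A2 <= V -> H + HD = Hs -> H = true + HX -> UX = Hs + V -> U1 + U2 <= UX - 1.
Proof. move=> /= *; lia. Qed.

Theorem lemma1 (T : finType) (e : rel T) (k c : nat) (L : {set T})
    (C : 'I_k -> seq T) (h0 : T) (p : 'I_k) (v x : T) :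
  symmetric e -> irreflexive e -> 0 < k -> 0 < c ->
  chorded_family e c C ->
  union_verts C != [set: T] ->
  (forall D : 'I_k -> seq T, chorded_family e c D ->
     #|union_verts D :&: L| <= #|union_verts C :&: L| /\
     (#|union_verts D :&: L| = #|union_verts C :&: L| ->
        #|union_verts D| <= #|union_verts C|)) ->
  h0 \in ~: union_verts C ->
  v \in nbhd_set e (cverts (C p)) (component e (~: union_verts C) h0) ->
  x \in component e (~: union_verts C) h0 ->
  ~~ e (next (C p) v) x /\
  deg e (~: union_verts C :|: cverts (C p)) (next (C p) v)
    + deg e (~: union_verts C :|: cverts (C p)) x
  <= #|~: union_verts C :|: cverts (C p)| - 1.
Proof.
move=> se irr k0 c0 hfam nT hmax h0H hvN hxH.
have [hc _] := hfam; have /andP [/and3P [us sz cy] _] := hc p.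
case/bigcupP: hvN => u uH; rewrite /nbhd inE => /andP [hvV euv].
have hv : v \in C p by rewrite inE in hvV.
have noH : forall y, y \in component e (~: union_verts C) h0 -> ~~ e (next (C p) v) y.
  move=> y yH; apply/negP => hy.
  have [q [hq lq uq aq]] := comp_path se uH yH.
  by apply: (@coreA T e k c L C p v u q se hfam hmax hv euv hq uq aq); rewrite lq.
split; first exact: noH.
set U := union_verts C in hmax hxH uH noH *.
set H := component e (~: U) h0 in hxH uH noH *.
set V := cverts (C p) in hvV *.
have HHs : H \subset ~: U by apply/subsetP => z; rewrite /H inE => /andP [].
have xHs : x \in ~: U := subsetP HHs x hxH.
have VU : ~: U :&: V = set0.
  apply/setP => z; rewrite !inE; apply/negbTE/andP => [[zU zV]].
  by move/negP: zU; apply; apply: (cverts_union (p := p)); rewrite inE.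
rewrite /deg !nbhdU.
have b1 : #|nbhd e (~: U) (next (C p) v)| <= #|~: U :\: H|.
  apply: subset_leq_card; apply/subsetP => z; rewrite /nbhd inE => /andP [zHs evz].
  rewrite in_setD zHs andbT; apply/negP => zH.
  by rewrite (negbTE (noH z zH)) in evz.
have b2 : #|nbhd e (~: U) x| <= #|H :\ x|.
  apply: subset_leq_card; apply/subsetP => z; rewrite /nbhd inE => /andP [zHs exz].
  rewrite in_setD1; apply/andP; split.
    by apply/negP => /eqP zx; rewrite zx irr in exz.
  move: (hxH); rewrite /H inE => /andP [_ hcx]; rewrite inE zHs /=.
  by apply: connect_trans hcx _; apply: connect1; rewrite /= exz zHs xHs.
have b3 : #|nbhd e V x| + #|nbhd e V (next (C p) v)| <= #|V|.
  have inj : {in nbhd e V x &, injective (next (C p))}.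
    by apply: in2W; apply: (can_inj (prev_next us)).
  rewrite -(card_in_imset inj).
  have sub : next (C p) @: nbhd e V x \subset V :\: nbhd e V (next (C p) v).
    apply/subsetP => z0 /imsetP [w wN ->]; move: wN; rewrite /nbhd inE => /andP [wV exw].
    have hw : w \in C p by rewrite inE in wV.
    have nwV : next (C p) w \in V by rewrite inE mem_next.
    rewrite in_setD nwV andbT inE nwV /=; apply/negP => hnn.
    case: (eqVneq w v) => [wv|wv].
      by rewrite wv irr in hnn.
    case: (eqVneq w (next (C p) v)) => [wnv|wnv].
      by have := noH x hxH; rewrite se -wnv exw.
    have [q [hq lq uq aq]] := comp_path se hxH uH.
    apply: (@coreB T e k c L C p v w x q se hfam hmax hv hw wv wnv exw _ hq uq aq hnn).
    by rewrite lq.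
  have := subset_leq_card sub.
  have := cardsID (nbhd e V (next (C p) v)) V.
  have -> : V :&: nbhd e V (next (C p) v) = nbhd e V (next (C p) v).
    by apply/setIidPr; apply/subsetP => z1; rewrite /nbhd inE => /andP [].
  move=> h2 h1; rewrite -h2 [X in X <= _]addnC leq_add2l; exact: h1.
have c1 := cardsU (~: U) V; rewrite VU cards0 subn0 in c1.
have c2 := cardsID H (~: U).
have e2 : ~: U :&: H = H by apply/setIidPr.
rewrite e2 in c2.
have c3 := cardsD1 x H; rewrite hxH in c3.
have c4 := cardsU (nbhd e (~: U) (next (C p) v)) (nbhd e V (next (C p) v)).
have c5 := cardsU (nbhd e (~: U) x) (nbhd e V x).
exact: (arith_fin c4 c5 b1 b2 b3 c2 c3 c1).
Qed.
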